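(* Let $m<k$ be positive integers with $\gcd(m,k)=1$, $t\ge2$ an integer, and $n=tk$ (without offset) or $n=2(tk-m)$ (with offset); let $w=k$ (without offset) or $w=n/2$ (with offset). For each $0\le i<w$, the placement procedure for wedge $i$ described in the context is well-defined (for $i\ge1$, an index $j$ with $f^{i-1}_j=i$ exists, so $j^*$ is defined). Moreover, if $i\ge1$, the lower boundary of wedge $i$ aligns exactly with the front after placing wedge $i-1$, i.e. $\ell^i_j=f^{i-1}_{j^*+j}$ for all $j\ge0$. Finally, the front after placing wedge $i$ satisfies $f^i_j=s^{i+1}_j$ for all $j\ge0$.
   Context: Let $\vec v_i=(\cos\frac{2\pi i}{n},\sin\frac{2\pi i}{n})$. Wedge $0$ is a region tiled by translates of a fixed polygon (the prototile), bounded by its lower boundary, the polygonal path from the origin with successive steps $\vec v_{b_0},\vec v_{b_1},\dots$ where $b_j=\ell^0_j:=jm\bmod k$, and its upper boundary, the polygonal path from the origin with successive steps $\vec v_{u^0_j}$, where $u^0_j=jm\bmod k$ if this is nonzero and $u^0_j=k$ otherwise. Its base edge is the first segment of the lower boundary. Set $\ell^i_j=\ell^0_j+i$ and $u^i_j=u^0_j+i$. Placement: the front after wedge $0$ has direction sequence $f^0_j=u^0_j$. For $i\ge1$, let $j^*$ be the minimal index with $f^{i-1}_{j^*}=i$; wedge $i$ is wedge $0$ rotated counterclockwise by $\frac{2\pi i}{n}$ about the origin and translated by $\sum_{j=0}^{j^*-1}\vec v_{f^{i-1}_j}$ (so its base edge coincides with the first front edge in direction $i$); its lower and upper boundaries have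 direction sequences $(\ell^i_j)$ and $(u^i_j)$. The new front (upper boundary of the region covered so far, starting at the origin) has direction sequence $f^i_j=f^{i-1}_j$ for $j<j^*$ and $f^i_{j^*+j}=u^i_j$ for $j\ge0$. Shifted modular progression: $s^0_j=jm\bmod k$, and $s^{i+1}_j=s^i_j+k$ if $s^i_j=i$, $s^{i+1}_j=s^i_j$ otherwise. *)

(* Defs.v *)
From mathcomp Require Import all_boot.
Set Implicit Arguments. Unset Strict Implicit. Unset Printing Implicit Defensive.

Definition lo0 (m k j : nat) : nat := (j * m) %% k.
Definition lo (m k i j : nat) : nat := lo0 m k j + i.
Definition up0 (m k j : nat) : nat :=
  if (j * m) %% k == 0 then k else (j * m) %% k.
Definition up (m k i j : nat) : nat := up0 m k j + i.

Fixpoint sprog (m k i j : nat) : nat :=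
  match i with
  | 0 => (j * m) %% k
  | i'.+1 => if sprog m k i' j == i' then sprog m k i' j + k
             else sprog m k i' j
  end.

(* [front m k i f] : f is the direction sequence of the front after placing
   wedge i by the placement procedure (f^0 = u^0; f^i obtained from f^{i-1}
   by cutting at the minimal index j* with f^{i-1}_{j*} = i and appending u^i).
   The relation is only inhabited at stage i if j* exists at every stage. *)
Inductive front (m k : nat) : nat -> (nat -> nat) -> Prop :=
| front0 : front m k 0 (up0 m k)
| frontS (i : nat) (f : nat -> nat) (js : nat) :
    front m k i f ->
    f js = i.+1 ->
    (forall j, j < js -> f j <> i.+1) ->
    front m k i.+1 (fun j => if j < js then f j else up m k i.+1 (j - js)).

(* Main.v *)
Require Import Defs.
From mathcomp Require Import all_boot.
From mathcomp Require Import zify.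
Set Implicit Arguments. Unset Strict Implicit.

Definition Pr (k i r x : nat) : bool := (x %% k == r %% k) && (i <= x < i + k).

Lemma Pr_uniq k i r x y : Pr k i r x -> Pr k i r y -> x = y.
Proof.
wlog: x y / x <= y.
  move=> H Hx Hy; case: (leqP x y) => h; first exact: H.
  by apply/esym/H => //; apply: ltnW.
move=> le /andP[/eqP ex /andP[ix xk]] /andP[/eqP ey /andP[iy yk]].
have [d ed] : exists d, y = x + d by exists (y - x); lia.
subst y.
have dk : d < k by lia.
have : x + d == x + 0 %[mod k] by rewrite addn0 ex ey.
rewrite eqn_modDl mod0n modn_small // => /eqP ->; by rewrite addn0.
Qed.

Lemma sprogP m k i j : 0 < k -> Pr k i (j * m) (sprog m k i j).
Proof.
move=> k0; elim: i => [|i IH] /=.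
  by rewrite /Pr modn_mod eqxx ltn_pmod.
move: IH; rewrite /Pr; set x := sprog m k i j.
case/andP=> /eqP ex /andP[ix xk].
case: (boolP (x == i)) => /eqP xi.
  by rewrite modnDr ex eqxx /=; apply/andP; lia.
by rewrite ex eqxx /=; apply/andP; lia.
Qed.

Lemma frontP m k i f : 0 < k -> front m k i f -> forall j, Pr k i.+1 (j * m) (f j).
Proof.
move=> k0; elim=> {i f} [|i f js fr IH fjs fmin] j.
  rewrite /up0 /Pr; case: (boolP ((j * m) %% k == 0)) => /eqP e.
    by rewrite modnn e eqxx /=; apply/andP; lia.
  rewrite modn_mod eqxx /=; apply/andP; split; first lia.
  by have := ltn_pmod (j * m) k0; lia.
case: ifP => jl.
  move: (IH j); rewrite /Pr => /andP[-> /andP[a b]] /=.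
  have := fmin j; rewrite jl => /(_ isT) ne; apply/andP; lia.
have := IH js; rewrite fjs /Pr => /andP[/eqP e _].
rewrite /up /up0.
have hj : j = (j - js) + js by lia.
set d := j - js in hj *.
have cong : (if (d * m) %% k == 0 then k else (d * m) %% k) = d * m %[mod k].
  by case: eqP => [->|_]; rewrite ?modnn ?modn_mod.
rewrite -modnDm cong modnDm -modnDm e modnDm -mulnDl -hj eqxx /=.
by apply/andP; split; case: eqP => [_|ne]; lia.
Qed.

Lemma solve_mod m k a : 0 < m -> coprime m k -> exists j, (j * m) %% k = a %% k.
Proof.
move=> m0 cop; case: (egcdnP k m0) => km kn e _.
move/eqP: cop => g; rewrite g in e.
exists (a * km); rewrite -mulnA e mulnDr -modnDm mulnA modnMl add0n modn_mod muln1 //.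
Qed.

Lemma exists_js m k i f : 0 < m -> 0 < k -> coprime m k -> front m k i f ->
  exists j, f j = i.+1.
Proof.
move=> m0 k0 cop fr; case: (solve_mod i.+1 m0 cop) => j hj.
exists j; apply: (Pr_uniq (frontP k0 fr j)).
by rewrite /Pr hj eqxx leqnn /=; lia.
Qed.

Lemma exists_front m k i : 0 < m -> 0 < k -> coprime m k -> exists f, front m k i f.
Proof.
move=> m0 k0 cop; elim: i => [|i [f fr]]; first by exists (up0 m k); constructor.
have ex : exists j, f j == i.+1 by case: (exists_js m0 k0 cop fr) => j h; exists j; apply/eqP.
eexists; apply: (frontS fr (js := ex_minn ex)).
  by case: ex_minnP => x /eqP.
move=> j; case: ex_minnP => x _ H jl /eqP fj.
by have := H _ fj; rewrite leqNgt jl.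
Qed.

Theorem mainTheorem2 (m k t : nat) (offset : bool) :
  0 < m -> m < k -> coprime m k -> 2 <= t ->
  let n := if offset then 2 * (t * k - m) else t * k in
  let w := if offset then n %/ 2 else k in
  forall i, i < w ->
    (* well-definedness: the procedure produces a front after wedge i *)
    (exists f, front m k i f) /\
    (* for i >= 1: j* exists, and lower boundary of wedge i aligns with f^{i-1} *)
    (0 < i -> forall g, front m k i.-1 g ->
        (exists j, g j = i) /\
        (forall js, g js = i -> (forall j, j < js -> g j <> i) ->
           forall j, lo m k i j = g (js + j))) /\
    (* f^i_j = s^{i+1}_j *)
    (forall f, front m k i f -> forall j, f j = sprog m k i.+1 j).
Proof.
move=> m0 mk cop _ n w i _.
have k0 : 0 < k by apply: leq_trans mk.
split; first exact: exists_front.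
split.
  case: i => [//|i] _ g fr /=; split; first exact: exists_js fr.
  move=> js gjs _ j.
  apply: (Pr_uniq _ (frontP k0 fr (js + j))).
  have := frontP k0 fr js; rewrite gjs /Pr => /andP[/eqP e _].
  rewrite /lo /lo0 -modnDm modn_mod e modnDm -mulnDl addnC eqxx /=.
  by apply/andP; lia.
move=> f fr j; apply: (Pr_uniq (frontP k0 fr j)); exact: sprogP.
Qed.
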